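(* For every $t\ge1$, $$\|\Psi_{t,1}\|\le\sqrt{\frac{\|W+LVL^\top\|\kappa_F^2}{\lambda_{\min}(W)(1-\gamma_F^2)}},\qquad \|\Sigma_t-\Sigma\|\le\kappa_F^2\gamma_F^{t-1}\|W-\Sigma\|\sqrt{\frac{\|W+LVL^\top\|}{\lambda_{\min}(W)(1-\gamma_F^2)}},$$ $$\|L_t-L\|\le\frac{\kappa_F^3\gamma_F^{t}\|W-\Sigma\|\|C\|}{\lambda_{\min}(V)}\sqrt{\frac{\|W+LVL^\top\|}{\lambda_{\min}(W)(1-\gamma_F^2)}}.$$
   Context: Standing setup. Consider the discrete-time LTI system $x_{t+1}=Ax_t+w_t$, $y_t=Cx_t+v_t$ ($t\ge0$) with $x_t\in\mathbb R^n$, $y_t\in\mathbb R^p$, $x_0=0$, $w_t\overset{iid}{\sim}\mathcal N(0,W)$, $v_t\overset{iid}{\sim}\mathcal N(0,V)$, the two noise sequences independent. Assume $(A,W^{1/2})$ is stabilizable and $(A,C)$ is detectable. Let $\Sigma\succeq0$ be the unique positive semidefinite solution of $\Sigma=A\Sigma A^\top-A\Sigma C^\top(C\Sigma C^\top+V)^{-1}C\Sigma A^\top+W$ and $L=A\Sigma C^\top(C\Sigma C^\top+V)^{-1}$. Known constants $\alpha_0,\alpha_1,\psi,\bar\sigma>0$ satisfy $\alpha_0I_n\preceq W\preceq\alpha_1I_n$, $\alpha_0I_p\preceq V\preceq\alpha_1I_p$, $\|C\|\le\psi$, $\|\Sigma\|\le\bar\sigma$. Set $\kappa_F=\sqrt{\bar\sigma/\alpha_0}$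 and $\gamma_F=1-\frac{\alpha_0}{2\bar\sigma}$. $\|\cdot\|$ is the Euclidean/spectral norm and $\|\cdot\|_F$ the Frobenius norm. Finite-horizon Kalman recursion: $\Sigma_0=0$, $\Sigma_{t+1}=A\Sigma_tA^\top-A\Sigma_tC^\top(C\Sigma_tC^\top+V)^{-1}C\Sigma_tA^\top+W$, and $L_t=A\Sigma_tC^\top(C\Sigma_tC^\top+V)^{-1}$. For integers $k>l\ge0$, $\Psi_{k,l}=(A-L_{k-1}C)(A-L_{k-2}C)\cdots(A-L_lC)$, and $\Psi_{k,l}=I_n$ if $k\le l$. $\lambda_{\min}$ denotes the smallest eigenvalue. *)

(* Defs.v *)
From HB Require Import structures.
From mathcomp Require Import all_boot all_order all_algebra.
From mathcomp Require Import classical_sets reals.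
From mathcomp Require Import complex.
Set Implicit Arguments. Unset Strict Implicit. Unset Printing Implicit Defensive.
Import Order.TTheory GRing.Theory Num.Theory.
Local Open Scope ring_scope.

Section KalmanDefs.
Variable R : realType.

Definition vnorm (m : nat) (x : 'cV[R]_m) : R := Num.sqrt (\sum_i (x i 0) ^+ 2).

Definition opnorm (m k : nat) (M : 'M[R]_(m, k)) : R :=
  reals.sup [set vnorm (M *m x) | x in [set x : 'cV[R]_k | vnorm x <= 1]]%classic.

Definition lambda_min (m : nat) (M : 'M[R]_m) : R :=
  reals.inf [set a : R | eigenvalue M a]%classic.

Definition psd (m : nat) (M : 'M[R]_m) : Prop :=
  M^T = M /\ forall x : 'cV[R]_m, 0 <= (x^T *m M *m x) 0 0.
Definition loewner_le (m : nat) (M N : 'M[R]_m) : Prop := psd (N - M).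

Definition schur_stable (m : nat) (M : 'M[R]_m) : Prop :=
  forall z : R[i], eigenvalue (map_mx (fun x : R => (x%:C)%C) M) z -> `|z| < 1.

Definition stabilizable (m k : nat) (A : 'M[R]_m) (B : 'M[R]_(m, k)) : Prop :=
  exists K : 'M[R]_(k, m), schur_stable (A + B *m K).
Definition detectable (m k : nat) (A : 'M[R]_m) (C : 'M[R]_(k, m)) : Prop :=
  exists L : 'M[R]_(m, k), schur_stable (A - L *m C).

Definition riccati (n p : nat) (A : 'M[R]_n) (C : 'M[R]_(p, n)) (W : 'M[R]_n)
  (V : 'M[R]_p) (S : 'M[R]_n) : 'M[R]_n :=
  A *m S *m A^T - A *m S *m C^T *m invmx (C *m S *m C^T + V) *m C *m S *m A^T + W.

Definition kgain (n p : nat) (A : 'M[R]_n) (C : 'M[R]_(p, n)) (V : 'M[R]_p)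
  (S : 'M[R]_n) : 'M[R]_(n, p) :=
  A *m S *m C^T *m invmx (C *m S *m C^T + V).

Fixpoint Sig (n p : nat) (A : 'M[R]_n) (C : 'M[R]_(p, n)) (W : 'M[R]_n)
  (V : 'M[R]_p) (t : nat) : 'M[R]_n :=
  match t with
  | 0 => 0
  | t'.+1 => riccati A C W V (Sig A C W V t')
  end.

Definition Lt (n p : nat) (A : 'M[R]_n) (C : 'M[R]_(p, n)) (W : 'M[R]_n)
  (V : 'M[R]_p) (t : nat) : 'M[R]_(n, p) := kgain A C V (Sig A C W V t).

(* Psi_{k,l} = (A - L_{k-1} C) ... (A - L_l C), identity if k <= l *)
Fixpoint Psi (n p : nat) (A : 'M[R]_n) (C : 'M[R]_(p, n)) (W : 'M[R]_n)
  (V : 'M[R]_p) (k l : nat) : 'M[R]_n :=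
  match k with
  | 0 => 1%:M
  | k'.+1 => if (k'.+1 <= l)%N then 1%:M
             else (A - Lt A C W V k' *m C) *m Psi A C W V k' l
  end.

End KalmanDefs.

(* Main.v *)
Require Import Defs.
From HB Require Import structures.
From mathcomp Require Import all_boot all_order all_algebra.
From mathcomp Require Import classical_sets reals.
From mathcomp Require Import ring lra.
Import Order.TTheory GRing.Theory Num.Theory.
Local Open Scope ring_scope.
Set Implicit Arguments. Unset Strict Implicit. Unset Printing Implicit Defensive.


Section Basic.
Context {R : realType}.

Definition bil (m : nat) (B : 'M[R]_m) (x y : 'cV[R]_m) : R := (x^T *m B *m y) 0 0.

Lemma bilDr m (B : 'M[R]_m) x y z : bil B x (y + z) = bil B x y + bil B x z.
Proof. by rewrite /bil mulmxDr mxE. Qed.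
Lemma bilDl m (B : 'M[R]_m) x y z : bil B (x + y) z = bil B x z + bil B y z.
Proof. by rewrite /bil linearD /= !mulmxDl mxE. Qed.
Lemma bilZr m (B : 'M[R]_m) a x y : bil B x (a *: y) = a * bil B x y.
Proof. by rewrite /bil -scalemxAr mxE. Qed.
Lemma bilZl m (B : 'M[R]_m) a x y : bil B (a *: x) y = a * bil B x y.
Proof. by rewrite /bil linearZ /= -!scalemxAl mxE. Qed.
Lemma bilNr m (B : 'M[R]_m) x y : bil B x (- y) = - bil B x y.
Proof. by rewrite -scaleN1r bilZr mulN1r. Qed.
Lemma bilNl m (B : 'M[R]_m) x y : bil B (- x) y = - bil B x y.
Proof. by rewrite -scaleN1r bilZl mulN1r. Qed.
Lemma bilBr m (B : 'M[R]_m) x y z : bil B x (y - z) = bil B x y - bil B x z.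
Proof. by rewrite bilDr bilNr. Qed.
Lemma bilBl m (B : 'M[R]_m) x y z : bil B (x - y) z = bil B x z - bil B y z.
Proof. by rewrite bilDl bilNl. Qed.
Lemma bil_tr m (B : 'M[R]_m) x y : bil B x y = bil B^T y x.
Proof.
rewrite /bil; have -> : forall M : 'M[R]_1, M 0 0 = M^T 0 0 by move=> M; rewrite mxE.
by rewrite !trmx_mul trmxK mulmxA.
Qed.
Lemma bil_sym m (B : 'M[R]_m) x y : B^T = B -> bil B x y = bil B y x.
Proof. by move=> HB; rewrite bil_tr HB. Qed.
Lemma bil_mulr m k (B : 'M[R]_(m,k)) (M : 'M[R]_m) x y :
  bil M x (B *m y) = (x^T *m (M *m B) *m y) 0 0.
Proof. by rewrite /bil !mulmxA. Qed.
Lemma bilMr m (B M : 'M[R]_m) x y : bil M x (B *m y) = bil (M *m B) x y.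
Proof. by rewrite /bil !mulmxA. Qed.
Lemma bilMl m (B M : 'M[R]_m) x y : bil M (B *m x) y = bil (B^T *m M) x y.
Proof. by rewrite /bil trmx_mul !mulmxA. Qed.
Lemma bil_conj m k (B : 'M[R]_(m,k)) (M : 'M[R]_k) x y :
  bil (B *m M *m B^T) x y = bil M (B^T *m x) (B^T *m y).
Proof. by rewrite /bil trmx_mul trmxK !mulmxA. Qed.
Lemma bil_addM m (B M : 'M[R]_m) x y : bil (B + M) x y = bil B x y + bil M x y.
Proof. by rewrite /bil mulmxDr mulmxDl mxE. Qed.
Lemma bil_subM m (B M : 'M[R]_m) x y : bil (B - M) x y = bil B x y - bil M x y.
Proof. by rewrite /bil mulmxBr mulmxBl !mxE. Qed.
Lemma bil0M m (x y : 'cV[R]_m) : bil 0 x y = 0.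
Proof. by rewrite /bil mulmx0 mul0mx mxE. Qed.
Lemma bil_scalar m (a : R) (x y : 'cV[R]_m) : bil a%:M x y = a * bil 1%:M x y.
Proof. by rewrite /bil mul_mx_scalar -scalemxAl mxE mulmx1. Qed.

Definition dot m (x y : 'cV[R]_m) := bil 1%:M x y.

Lemma dot_sum m (x : 'cV[R]_m) : dot x x = \sum_i (x i 0) ^+ 2.
Proof. by rewrite /dot /bil mulmx1 mxE; apply: eq_bigr => i _; rewrite mxE expr2. Qed.
Lemma dot_ge0 m (x : 'cV[R]_m) : 0 <= dot x x.
Proof. by rewrite dot_sum; apply: sumr_ge0 => i _; apply: sqr_ge0. Qed.
Lemma vnormE m (x : 'cV[R]_m) : vnorm x = Num.sqrt (dot x x).
Proof. by rewrite dot_sum. Qed.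
Lemma vnorm_ge0 m (x : 'cV[R]_m) : 0 <= vnorm x.
Proof. exact: sqrtr_ge0. Qed.
Lemma vnorm_sq m (x : 'cV[R]_m) : vnorm x ^+ 2 = dot x x.
Proof. by rewrite vnormE sqr_sqrtr // dot_ge0. Qed.
Lemma dot_eq0 m (x : 'cV[R]_m) : dot x x = 0 -> x = 0.
Proof.
rewrite dot_sum => /eqP; rewrite psumr_eq0; last by move=> i _; apply: sqr_ge0.
move=> /allP H; apply/matrixP => i j; rewrite (ord1 j) mxE.
by have /(_ (mem_index_enum i)) := H i; rewrite /= sqrf_eq0 => /eqP.
Qed.
Lemma vnorm_eq0 m (x : 'cV[R]_m) : vnorm x = 0 -> x = 0.
Proof. by move=> H; apply: dot_eq0; rewrite -vnorm_sq H expr0n. Qed.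
Lemma vnorm0 m : vnorm (0 : 'cV[R]_m) = 0.
Proof. by rewrite vnormE /dot /bil mulmx0 mxE sqrtr0. Qed.
Lemma vnormZ m (a : R) (x : 'cV[R]_m) : vnorm (a *: x) = `|a| * vnorm x.
Proof.
rewrite !vnormE /dot bilZl bilZr mulrA -expr2 sqrtrM ?sqr_ge0 //.
by rewrite sqrtr_sqr.
Qed.

Lemma quad_disc (a b c : R) : 0 <= a -> (forall s, 0 <= a * s ^+ 2 + 2 * b * s + c) -> b ^+ 2 <= a * c.
Proof.
move=> a0 H.
case: (ltP 0 a) => [ap|a0'].
  pose t := b / a.
  have bt : b = a * t by rewrite /t mulrCA divff ?mulr1 // gt_eqF.
  have := H (- t); rewrite bt => h; nra.
have a00 : a = 0 by apply/eqP; rewrite eq_le a0 a0'.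
subst a; rewrite mul0r.
case: (b =P 0) => [->|bn]; first by rewrite expr0n.
exfalso; have := H (- (c + 1) / (2 * b)); rewrite mul0r add0r mulrA.
have -> : 2 * b * - (c + 1) / (2 * b) = - (c + 1).
  by rewrite mulrC mulrA mulVf ?mul1r // mulf_neq0 // ?pnatr_eq0 //; apply/eqP.
lra.
Qed.

Lemma bil_CS m (B : 'M[R]_m) x y : B^T = B -> (forall z, 0 <= bil B z z) ->
  bil B x y ^+ 2 <= bil B x x * bil B y y.
Proof.
move=> HB Hp; rewrite mulrC; apply: quad_disc; first exact: Hp.
move=> s.
have := Hp (x + s *: y).
rewrite bilDl !bilDr !bilZl !bilZr (bil_sym x y HB); lra.
Qed.

Lemma dot_CS m (x y : 'cV[R]_m) : dot x y <= vnorm x * vnorm y.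
Proof.
have H : dot x y ^+ 2 <= dot x x * dot y y := @bil_CS m 1%:M x y (trmx1 _ _) (@dot_ge0 m).
rewrite -!vnorm_sq -exprMn in H.
have P0 := mulr_ge0 (vnorm_ge0 x) (vnorm_ge0 y).
move: H P0; set P := vnorm x * vnorm y; set d := dot x y => H P0.
case: (leP d P) => // h; exfalso; nra.
Qed.

End Basic.


Section Opnorm.
Context {R : realType}.

Lemma sq_le (a b : R) : 0 <= b -> a ^+ 2 <= b ^+ 2 -> a <= b.
Proof. move=> b0 H; case: (leP a b) => // h; exfalso; nra. Qed.

Lemma dotMl a b (N : 'M[R]_(a,b)) (y : 'cV[R]_b) (w : 'cV[R]_a) :
  dot (N *m y) w = dot y (N^T *m w).
Proof. by rewrite /dot /bil !mulmx1 trmx_mul mulmxA. Qed.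

Lemma dotN m (x y : 'cV[R]_m) : dot (- x) y = - dot x y.
Proof. exact: bilNl. Qed.

Lemma vnormN m (x : 'cV[R]_m) : vnorm (- x) = vnorm x.
Proof. by rewrite -scaleN1r vnormZ normrN normr1 mul1r. Qed.

Lemma dot_abs_CS m (x y : 'cV[R]_m) : `|dot x y| <= vnorm x * vnorm y.
Proof.
case: (lerP 0 (dot x y)) => h; first by rewrite ger0_norm // dot_CS.
by rewrite ltr0_norm // -dotN -(vnormN x) dot_CS.
Qed.

Lemma mx_bound a b (M : 'M[R]_(a,b)) :
  exists2 c, 0 <= c & forall x, vnorm (M *m x) <= c * vnorm x.
Proof.
exists (Num.sqrt (\sum_i vnorm (row i M)^T ^+ 2)); first exact: sqrtr_ge0.
move=> x; apply: sq_le; first by apply: mulr_ge0; [apply: sqrtr_ge0|apply: vnorm_ge0].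
rewrite exprMn !vnorm_sq sqr_sqrtr; last by apply: sumr_ge0 => i _; apply: sqr_ge0.
rewrite [dot (M *m x) _]dot_sum -vnorm_sq mulr_suml; apply: ler_sum => i _.
have -> : (M *m x) i 0 = dot (row i M)^T x.
  by rewrite /dot /bil trmxK mulmx1 -row_mul !mxE.
have h := dot_abs_CS (row i M)^T x.
rewrite -exprMn; move: h.
have h1 := ler_norm (dot (row i M)^T x); have h2 := ler_norm (- dot (row i M)^T x).
rewrite normrN in h2.
move: h1 h2; set d := dot _ _; set P := _ * _; set e := `|d| => h1 h2 h.
have e0 : 0 <= e := normr_ge0 _.
have : (e - d) * (e + d) >= 0 by apply: mulr_ge0; lra.
nra.
Qed.

Definition oset a b (M : 'M[R]_(a,b)) :=
  [set vnorm (M *m x) | x in [set x : 'cV[R]_b | vnorm x <= 1]]%classic.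

Lemma oset_has_sup a b (M : 'M[R]_(a,b)) : has_sup (oset M).
Proof.
split; first by exists 0; exists 0; rewrite /= ?vnorm0 ?mulmx0 ?vnorm0.
have [c c0 Hc] := mx_bound M; exists c => _ [x /= Hx <-].
apply: le_trans (Hc x) _; rewrite -[leRHS]mulr1; exact: ler_wpM2l.
Qed.

Lemma opnorm_ge0 a b (M : 'M[R]_(a,b)) : 0 <= opnorm M.
Proof.
apply: (sup_upper_bound (oset_has_sup M)).
by exists 0; rewrite /= ?vnorm0 ?mulmx0 ?vnorm0.
Qed.

Lemma opnormP a b (M : 'M[R]_(a,b)) x : vnorm (M *m x) <= opnorm M * vnorm x.
Proof.
case: (vnorm x =P 0) => [/vnorm_eq0 ->|nx]; first by rewrite mulmx0 !vnorm0 mulr0.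
have vp : 0 < vnorm x by rewrite lt_neqAle vnorm_ge0 eq_sym; apply/andP; split => //; apply/eqP.
pose y := (vnorm x)^-1 *: x.
have vy : vnorm y = 1 by rewrite vnormZ ger0_norm ?invr_ge0 ?vnorm_ge0 // mulVf //; apply/eqP.
have : vnorm (M *m y) <= opnorm M.
  by apply: (sup_upper_bound (oset_has_sup M)); exists y => //=; rewrite vy.
rewrite /y -scalemxAr vnormZ ger0_norm ?invr_ge0 ?vnorm_ge0 //.
rewrite -(ler_pM2l vp) mulrA mulfV ?mul1r; last by apply/eqP.
by rewrite mulrC.
Qed.

Lemma opnorm_le a b (M : 'M[R]_(a,b)) c :
  0 <= c -> (forall x, vnorm (M *m x) <= c * vnorm x) -> opnorm M <= c.
Proof.
move=> c0 H; apply: ge_sup; first by exists 0; exists 0; rewrite /= ?vnorm0 ?mulmx0 ?vnorm0.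
move=> _ [x /= Hx <-]; apply: le_trans (H x) _; rewrite -[leRHS]mulr1; exact: ler_wpM2l.
Qed.

Lemma bound_tr a b (M : 'M[R]_(a,b)) c :
  0 <= c -> (forall x, vnorm (M *m x) <= c * vnorm x) ->
  forall y, vnorm (M^T *m y) <= c * vnorm y.
Proof.
move=> c0 H y.
have e : vnorm (M^T *m y) ^+ 2 = dot y (M *m (M^T *m y)) by rewrite vnorm_sq dotMl trmxK.
have h1 := dot_CS y (M *m (M^T *m y)).
have h2 := H (M^T *m y).
have h3 := vnorm_ge0 (M^T *m y); have h4 := vnorm_ge0 y.
move: e h1 h2 h3 h4; set z := vnorm (M^T *m y); set w := vnorm (M *m (M^T *m y)).
set v := vnorm y; set d := dot _ _ => e h1 h2 h3 h4.
case: (leP z (c * v)) => // hz; exfalso.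
have : z ^+ 2 <= v * (c * z) by rewrite e; apply: le_trans h1 _; apply: ler_wpM2l.
have cv0 : 0 <= c * v by apply: mulr_ge0.
have zp : 0 < z by lra.
have : 0 < (z - c * v) * z by apply: mulr_gt0; lra.
nra.
Qed.

Lemma opnormP_tr a b (M : 'M[R]_(a,b)) y : vnorm (M^T *m y) <= opnorm M * vnorm y.
Proof. exact: (bound_tr (opnorm_ge0 M) (opnormP M)). Qed.

Lemma bil_le_opnorm m (M : 'M[R]_m) x : bil M x x <= opnorm M * vnorm x ^+ 2.
Proof.
have -> : bil M x x = dot x (M *m x) by rewrite /dot /bil mulmx1 mulmxA.
apply: le_trans (dot_CS _ _) _.
rewrite expr2 mulrCA; apply: ler_wpM2l; first exact: vnorm_ge0.
by apply: opnormP.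
Qed.

Lemma unit_vec m : (0 < m)%N -> exists e : 'cV[R]_m, vnorm e = 1.
Proof.
move=> m0; exists (delta_mx (Ordinal m0) 0).
rewrite vnormE dot_sum (bigD1 (Ordinal m0)) //= big1 ?addr0.
  by rewrite mxE !eqxx /= expr1n sqrtr1.
by move=> i /negbTE hi; rewrite mxE hi /= expr0n.
Qed.

Lemma vnorm_dim0 b (x : 'cV[R]_b) (M : 'M[R]_(0,b)) : vnorm (M *m x) = 0.
Proof. by rewrite (flatmx0 (M *m x)) vnorm0. Qed.
Lemma vnorm_dim0' a (x : 'cV[R]_0) (M : 'M[R]_(a,0)) : vnorm (M *m x) = 0.
Proof. by rewrite (thinmx0 M) mul0mx vnorm0. Qed.

End Opnorm.


Section Lmin.
Context {R : realType}.

Lemma bil00 m (P : 'M[R]_m) : bil P 0 0 = 0.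
Proof. by rewrite /bil trmx0 !mul0mx mxE. Qed.

Lemma bil_dot m (P : 'M[R]_m) x y : bil P x y = dot x (P *m y).
Proof. by rewrite /dot /bil mulmx1 mulmxA. Qed.

Lemma vnorm_pos m (x : 'cV[R]_m) : x != 0 -> 0 < vnorm x.
Proof.
move=> nx; rewrite lt_neqAle vnorm_ge0 andbT eq_sym; apply/eqP => h.
by move: nx; rewrite (vnorm_eq0 h) eqxx.
Qed.

Lemma scale_unit m (P : 'M[R]_m) (c : R) x : x != 0 ->
  (forall y, vnorm y = 1 -> c <= bil P y y) -> c * vnorm x ^+ 2 <= bil P x x.
Proof.
move=> nx H; have vp := vnorm_pos nx.
pose y := (vnorm x)^-1 *: x.
have vy : vnorm y = 1 by rewrite vnormZ ger0_norm ?invr_ge0 ?vnorm_ge0 // mulVf // gt_eqF.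
have := H y vy; rewrite /y bilZl bilZr mulrA -expr2.
set v := vnorm x; set q := bil P x x => h.
have v2 : 0 < v ^+ 2 by apply: exprn_gt0.
have := ler_wpM2r (ltW v2) h.
have -> : v^-1 ^+ 2 * q * v ^+ 2 = q by field; rewrite gt_eqF.
by [].
Qed.

Lemma lambda_min_prop m (P : 'M[R]_m) (a0 : R) : (0 < m)%N -> 0 < a0 -> P^T = P ->
  (forall x, a0 * vnorm x ^+ 2 <= bil P x x) ->
  [/\ a0 <= lambda_min P, (forall x, lambda_min P * vnorm x ^+ 2 <= bil P x x)
    & (forall x, vnorm x = 1 -> lambda_min P <= bil P x x)].
Proof.
move=> m0 a0p PT Hlow.
pose S := [set bil P x x | x in [set x : 'cV[R]_m | vnorm x = 1]]%classic.
have [e ve] := @unit_vec R m m0.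
have S0 : (S !=set0)%classic by exists (bil P e e); exists e.
have lbS : lbound S a0.
  by move=> _ [x /= vx <-]; have := Hlow x; rewrite vx expr1n mulr1.
have hlb : has_lbound S by exists a0.
pose m1 := inf S.
have HA : forall x, vnorm x = 1 -> m1 <= bil P x x.
  by move=> x vx; apply: (ge_inf hlb); exists x.
have HB : a0 <= m1 by apply: lb_le_inf.
have HC : forall x, m1 * vnorm x ^+ 2 <= bil P x x.
  move=> x; case: (x =P 0) => [->|/eqP nx]; first by rewrite vnorm0 expr0n mulr0 bil00.
  exact: scale_unit.
pose N := P - m1%:M.
have NT : N^T = N by rewrite /N linearB /= PT tr_scalar_mx.
have Nq : forall x, bil N x x = bil P x x - m1 * vnorm x ^+ 2.
  by move=> x; rewrite /N bil_subM bil_scalar vnorm_sq.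
have Npsd : forall x, 0 <= bil N x x by move=> x; rewrite Nq subr_ge0.
have HD : eigenvalue P m1.
  rewrite /eigenvalue /eigenspace kermx_eq0 row_free_unit -/N.
  apply/negP => Nu.
  have [c1 c10 Hc1] := mx_bound (invmx N).
  pose o := opnorm N.
  have o0 : 0 <= o := opnorm_ge0 N.
  pose dl := (c1 ^+ 2 * o + 1)^-1.
  have dlp : 0 < dl by rewrite invr_gt0; have := mulr_ge0 (sqr_ge0 c1) o0; lra.
  have key : forall x, vnorm x = 1 -> dl <= bil N x x.
    move=> x vx.
    have h1 : 1 <= c1 * vnorm (N *m x).
      by rewrite -vx; have := Hc1 (N *m x); rewrite mulmxA mulVmx // mul1mx.
    have h2 : vnorm (N *m x) ^+ 2 = bil N (N *m x) x.
      by rewrite vnorm_sq /dot /bil mulmx1 mulmxA.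
    have h3 := bil_CS (N *m x) x NT Npsd.
    have h4 := bil_le_opnorm N (N *m x).
    rewrite -/o -h2 in h3 h4.
    move: h1 h3 h4 (Npsd x) (vnorm_ge0 (N *m x)).
    set z := vnorm (N *m x); set q := bil N x x; set w := bil N (N *m x) (N *m x).
    move=> h1 h3 h4 q0 z0.
    have zp : 0 < z by nra.
    have h5 : z ^+ 2 <= o * q.
      have h8 : w * q <= (o * z ^+ 2) * q by apply: ler_wpM2r.
      have : z ^+ 2 * z ^+ 2 <= z ^+ 2 * (o * q).
        rewrite -expr2; apply: le_trans h3 _; apply: le_trans h8 _.
        by rewrite (_ : o * z ^+ 2 * q = z ^+ 2 * (o * q)) //; ring.
      by rewrite ler_pM2l // exprn_gt0.
    have h6 : 1 <= c1 ^+ 2 * z ^+ 2 by rewrite -exprMn; nra.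
    have h7 : 1 <= q * (c1 ^+ 2 * o + 1).
      have : c1 ^+ 2 * z ^+ 2 <= c1 ^+ 2 * (o * q) by apply: ler_wpM2l => //; apply: sqr_ge0.
      have := sqr_ge0 c1; nra.
    rewrite /dl -[_^-1]mul1r ler_pdivrMr; last by have := mulr_ge0 (sqr_ge0 c1) o0; lra.
    by [].
  have : m1 + dl <= m1.
    apply: lb_le_inf => // _ [x /= vx <-].
    by have := key x vx; rewrite Nq vx expr1n mulr1; lra.
  lra.
have HE : forall a, eigenvalue P a -> m1 <= a.
  move=> a /eigenvalueP [v vP nv].
  pose x := v^T.
  have Px : P *m x = a *: x by rewrite /x -{1}PT -trmx_mul vP linearZ.
  have nx : x != 0 by rewrite /x trmx_eq0.
  have := HC x; rewrite bil_dot Px /dot bilZr -/(dot x x) -vnorm_sq.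
  by move=> h; rewrite -(ler_pM2r (exprn_gt0 2 (vnorm_pos nx))).
have HL : lambda_min P = m1.
  have hE : has_lbound [set a : R | eigenvalue P a]%classic by exists m1.
  apply/eqP; rewrite eq_le; apply/andP; split.
    exact: (ge_inf hE).
  by apply: lb_le_inf; [exists m1 | ].
by rewrite HL; split.
Qed.

End Lmin.


Section Alg.
Context {R : realType}.

Definition gb a b (B : 'M[R]_(a,b)) (x : 'cV[R]_a) (y : 'cV[R]_b) := (x^T *m B *m y) 0 0.
Lemma gb_add a b (B B' : 'M[R]_(a,b)) x y : gb (B + B') x y = gb B x y + gb B' x y.
Proof. by rewrite /gb mulmxDr mulmxDl mxE. Qed.
Lemma gb_opp a b (B : 'M[R]_(a,b)) x y : gb (- B) x y = - gb B x y.
Proof. by rewrite /gb mulmxN mulNmx mxE. Qed.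
Lemma gb_sub a b (B B' : 'M[R]_(a,b)) x y : gb (B - B') x y = gb B x y - gb B' x y.
Proof. by rewrite gb_add gb_opp. Qed.
Lemma gb_ext a b (B B' : 'M[R]_(a,b)) : (forall x y, gb B x y = gb B' x y) -> B = B'.
Proof.
move=> H; apply/matrixP => i j; have := H (delta_mx i 0) (delta_mx j 0).
by rewrite /gb !trmx_delta -!rowE -!colE !mxE.
Qed.

End Alg.

Ltac mx_expand := rewrite ?(mulmxDl, mulmxDr, mulmxBl, mulmxBr, mulNmx, mulmxN, opprK, opprD);
  rewrite ?(raddfD, raddfB, raddfN) /= ?trmx_mul ?trmxK ?(mulmxDl, mulmxDr, mulmxBl, mulmxBr, mulNmx, mulmxN, opprK, opprD) ?mulmxA.
Ltac gb_close := apply: gb_ext => ? ?; rewrite ?(gb_add, gb_sub, gb_opp); lra.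

Section Gen.
Context {R : realType} (n p : nat) (A : 'M[R]_n) (C : 'M[R]_(p,n)) (W : 'M[R]_n) (V : 'M[R]_p).

Lemma phi_gen (S : 'M[R]_n) (M : 'M[R]_p) (K K' : 'M[R]_(n,p)) :
  K *m M = A *m S *m C^T ->
  (forall k (X : 'M[R]_(k,p)), X *m C *m S *m A^T = X *m M *m K^T) ->
  (forall k (X : 'M[R]_(k,p)), X *m C *m S *m C^T = X *m M - X *m V) ->
  (A - K' *m C) *m S *m (A - K' *m C)^T + W + K' *m V *m K'^T =
  (A *m S *m A^T - K *m M *m K^T + W) + (K' - K) *m M *m (K' - K)^T.
Proof.
move=> h1 h2 h3.
mx_expand.
rewrite !h2 !h3 -!h1; mx_expand.
gb_close.
Qed.

Lemma diff_gen (S1 S : 'M[R]_n) (M1 M : 'M[R]_p) (K1 K : 'M[R]_(n,p)) :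
  K1 *m M1 = A *m S1 *m C^T -> K *m M = A *m S *m C^T ->
  (forall k (X : 'M[R]_(k,p)), X *m C *m S1 *m A^T = X *m M1 *m K1^T) ->
  (forall k (X : 'M[R]_(k,p)), X *m C *m S *m A^T = X *m M *m K^T) ->
  (forall k (X : 'M[R]_(k,p)), X *m C *m S1 *m C^T = X *m M1 - X *m V) ->
  (forall k (X : 'M[R]_(k,p)), X *m C *m S *m C^T = X *m M - X *m V) ->
  (A *m S1 *m A^T - K1 *m M1 *m K1^T + W) - (A *m S *m A^T - K *m M *m K^T + W) =
  (A - K1 *m C) *m (S1 - S) *m (A - K *m C)^T.
Proof.
move=> e1 e2 h1 h2 h3 h4.
mx_expand.
rewrite !h1 !h2 !h3 !h4 -!e1 -!e2; mx_expand.
gb_close.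
Qed.

Lemma gain_gen (S1 S : 'M[R]_n) (M1 M : 'M[R]_p) (K1 K : 'M[R]_(n,p)) :
  K1 *m M1 = A *m S1 *m C^T -> K *m M = A *m S *m C^T ->
  (forall k (X : 'M[R]_(k,p)), X *m C *m S1 *m C^T = X *m M1 - X *m V) ->
  (forall k (X : 'M[R]_(k,p)), X *m C *m S *m C^T = X *m M - X *m V) ->
  (K1 - K) *m M1 = (A - K *m C) *m (S1 - S) *m C^T.
Proof.
move=> e1 e2 h3 h4.
mx_expand.
rewrite !h3 !h4 -!e1 -!e2; mx_expand.
gb_close.
Qed.
End Gen.

Section Kal.
Context {R : realType} (n p : nat) (A : 'M[R]_n) (C : 'M[R]_(p,n)) (W : 'M[R]_n) (V : 'M[R]_p).

Definition Mof (S : 'M[R]_n) := C *m S *m C^T + V.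
Definition Phi (K : 'M[R]_(n,p)) (S : 'M[R]_n) :=
  (A - K *m C) *m S *m (A - K *m C)^T + W + K *m V *m K^T.

Lemma Mof_sym S : S^T = S -> V^T = V -> (Mof S)^T = Mof S.
Proof. by move=> ST VT; rewrite /Mof linearD /= !trmx_mul trmxK ST VT mulmxA. Qed.

Lemma Mof_unit S (a0 : R) : 0 < a0 -> (forall x, 0 <= bil S x x) ->
  (forall x, a0 * vnorm x ^+ 2 <= bil V x x) -> Mof S \in unitmx.
Proof.
move=> a0p Sp Vp.
rewrite -unitmx_tr -row_free_unit; apply: inj_row_free => v hv.
have Mx : Mof S *m v^T = 0 by rewrite -[Mof S]trmxK -trmx_mul hv trmx0.
have : bil (Mof S) v^T v^T = 0 by rewrite /bil -mulmxA Mx mulmx0 mxE.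
rewrite /Mof bil_addM bil_conj => h.
have h1 := Sp (C^T *m v^T); have h2 := Vp v^T.
have : a0 * vnorm v^T ^+ 2 <= 0 by lra.
move=> h3; have : vnorm v^T ^+ 2 <= 0 by rewrite -(ler_pM2l a0p) mulr0.
move=> h4; have : vnorm v^T = 0.
  by apply/eqP; rewrite -sqrf_eq0 eq_le h4 sqr_ge0.
by move/vnorm_eq0/eqP; rewrite trmx_eq0 => /eqP.
Qed.

Lemma F1 S : Mof S \in unitmx -> kgain A C V S *m Mof S = A *m S *m C^T.
Proof. by move=> Mu; rewrite /kgain mulmxKV. Qed.

Lemma F2 S : S^T = S -> V^T = V -> Mof S \in unitmx ->
  forall k (X : 'M[R]_(k,p)), X *m C *m S *m A^T = X *m Mof S *m (kgain A C V S)^T.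
Proof.
move=> ST VT Mu k X.
have : (Mof S)^T *m (kgain A C V S)^T = C *m S *m A^T.
  by rewrite -trmx_mul F1 // !trmx_mul trmxK ST mulmxA.
rewrite Mof_sym // => h.
by rewrite -!mulmxA h !mulmxA.
Qed.

Lemma F3 S k (X : 'M[R]_(k,p)) : X *m C *m S *m C^T = X *m Mof S - X *m V.
Proof. by rewrite /Mof mulmxDr addrK !mulmxA. Qed.

Lemma ric_eq S : S^T = S -> V^T = V -> Mof S \in unitmx ->
  riccati A C W V S = A *m S *m A^T - kgain A C V S *m Mof S *m (kgain A C V S)^T + W.
Proof. by move=> ST VT Mu; rewrite -F2. Qed.

Lemma phi_eq S K' : S^T = S -> V^T = V -> Mof S \in unitmx ->
  Phi K' S = riccati A C W V S +
    (K' - kgain A C V S) *m Mof S *m (K' - kgain A C V S)^T.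
Proof.
move=> ST VT Mu; rewrite ric_eq //; apply: phi_gen.
- exact: F1.
- exact: F2.
- exact: F3.
Qed.

Lemma ric_diff S1 S : S1^T = S1 -> S^T = S -> V^T = V -> Mof S1 \in unitmx -> Mof S \in unitmx ->
  riccati A C W V S1 - riccati A C W V S =
  (A - kgain A C V S1 *m C) *m (S1 - S) *m (A - kgain A C V S *m C)^T.
Proof.
move=> S1T ST VT M1u Mu; rewrite !ric_eq //; apply: diff_gen.
- exact: F1.
- exact: F1.
- exact: F2.
- exact: F2.
- exact: F3.
- exact: F3.
Qed.

Lemma gain_diff S1 S : Mof S1 \in unitmx -> Mof S \in unitmx ->
  kgain A C V S1 - kgain A C V S =
  (A - kgain A C V S *m C) *m (S1 - S) *m C^T *m invmx (Mof S1).
Proof.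
move=> M1u Mu.
by rewrite -(gain_gen (F1 M1u) (F1 Mu) (F3 S1) (F3 S)) mulmxK.
Qed.

End Kal.


Section Seq.
Context {R : realType} (n p : nat) (A : 'M[R]_n) (C : 'M[R]_(p,n)) (W : 'M[R]_n) (V : 'M[R]_p).
Context (a0 : R) (a0p : 0 < a0) (WT : W^T = W) (VT : V^T = V)
  (Wlow : forall x, a0 * vnorm x ^+ 2 <= bil W x x)
  (Vlow : forall x, a0 * vnorm x ^+ 2 <= bil V x x).

Lemma Wpsd x : 0 <= bil W x x.
Proof. by apply: le_trans (Wlow x); apply: mulr_ge0; [exact: ltW | apply: sqr_ge0]. Qed.
Lemma Vpsd x : 0 <= bil V x x.
Proof. by apply: le_trans (Vlow x); apply: mulr_ge0; [exact: ltW | apply: sqr_ge0]. Qed.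

Lemma phi_bil K S x : bil (Phi A C W V K S) x x =
  bil S ((A - K *m C)^T *m x) ((A - K *m C)^T *m x) + bil W x x + bil V (K^T *m x) (K^T *m x).
Proof. by rewrite /Phi !bil_addM !bil_conj. Qed.

Lemma phi_sym K S : S^T = S -> (Phi A C W V K S)^T = Phi A C W V K S.
Proof.
move=> ST.
have trD : forall X Y : 'M[R]_n, (X + Y)^T = X^T + Y^T by move=> X Y; rewrite raddfD.
have tr3 : forall k (B : 'M[R]_(n,k)) (N : 'M[R]_k), N^T = N -> (B *m N *m B^T)^T = B *m N *m B^T.
  by move=> k B N NT; rewrite !trmx_mul trmxK NT mulmxA.
rewrite /Phi; have h1 := tr3 _ (A - K *m C) S ST; have h2 := tr3 _ K V VT.
move: h1 h2; set X := _ *m S *m _; set Y := _ *m V *m _ => h1 h2.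
by rewrite !trD h1 h2 WT.
Qed.

Lemma Mof_psd S : (forall x, 0 <= bil S x x) -> forall y, 0 <= bil (Mof C V S) y y.
Proof. by move=> Sp y; rewrite /Mof bil_addM bil_conj; apply: addr_ge0 => //; apply: Vpsd. Qed.

Lemma phi_self S : S^T = S -> (forall x, 0 <= bil S x x) ->
  riccati A C W V S = Phi A C W V (kgain A C V S) S.
Proof.
move=> ST Sp; have Mu := Mof_unit C a0p Sp Vlow; rewrite phi_eq //.
by rewrite subrr mul0mx mul0mx addr0.
Qed.

Lemma Sig_psd k : (Sig A C W V k)^T = Sig A C W V k /\ forall x, 0 <= bil (Sig A C W V k) x x.
Proof.
elim: k => [|k [IT Ip]] /=; first by split; [rewrite trmx0 | move=> x; rewrite bil0M].
rewrite phi_self //; split; first exact: phi_sym.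
by move=> x; rewrite phi_bil; apply: addr_ge0; [apply: addr_ge0 => //; apply: Wpsd | apply: Vpsd].
Qed.

Lemma Sig_unit k : Mof C V (Sig A C W V k) \in unitmx.
Proof. by have [_ Ip] := Sig_psd k; exact: (Mof_unit C a0p Ip Vlow). Qed.

Lemma ric_le_phi S K' x : S^T = S -> (forall x, 0 <= bil S x x) ->
  bil (riccati A C W V S) x x <= bil (Phi A C W V K' S) x x.
Proof.
move=> ST Sp; have Mu := Mof_unit C a0p Sp Vlow; rewrite phi_eq //.
rewrite bil_addM bil_conj lerDl; exact: Mof_psd.
Qed.

Context (Sg : 'M[R]_n) (SgT : Sg^T = Sg) (Sgp : forall x, 0 <= bil Sg x x)
  (Sgfix : Sg = riccati A C W V Sg).

Let L := kgain A C V Sg.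
Let F := A - L *m C.

Lemma Sg_phi : Sg = Phi A C W V L Sg.
Proof. by rewrite {1}Sgfix phi_self. Qed.

Lemma Sig_le_Sg k x : bil (Sig A C W V k) x x <= bil Sg x x.
Proof.
elim: k x => [|k IH] x /=; first by rewrite bil0M.
have [IT Ip] := Sig_psd k.
apply: le_trans (ric_le_phi L x IT Ip) _.
rewrite [in X in _ <= X]Sg_phi !phi_bil lerD2r lerD2r; exact: IH.
Qed.

Lemma ric0 : riccati A C W V 0 = W.
Proof. by rewrite /riccati !mulmx0 !mul0mx subrr add0r. Qed.

Lemma Psi_step t : (1 <= t)%N ->
  Psi A C W V t.+1 1 = (A - Lt A C W V t *m C) *m Psi A C W V t 1.
Proof. by move=> t1 /=; rewrite ltnNge t1. Qed.

Lemma Psi_bound t x : (1 <= t)%N ->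
  bil W ((Psi A C W V t 1)^T *m x) ((Psi A C W V t 1)^T *m x) <= bil (Sig A C W V t) x x.
Proof.
elim: t x => [//|t IH] x t1.
case: t IH t1 => [|t] IH _.
  by rewrite /= ric0 trmx1 mul1mx.
rewrite Psi_step // trmx_mul -mulmxA.
apply: le_trans (IH _ isT) _.
have [IT Ip] := Sig_psd t.+1.
rewrite [Sig _ _ _ _ t.+2]/= phi_self // phi_bil /Lt.
rewrite -addrA lerDl; apply: addr_ge0; [apply: Wpsd | apply: Vpsd].
Qed.

Lemma Sg_low x : a0 * vnorm x ^+ 2 <= bil Sg x x.
Proof.
apply: le_trans (Wlow x) _; rewrite [in X in _ <= X]Sg_phi phi_bil.
have := Sgp ((A - L *m C)^T *m x); have := Vpsd (L^T *m x); lra.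
Qed.

Context (sb : R) (sbp : 0 < sb) (Sgsb : opnorm Sg <= sb) (g : R) (gp : 0 <= g)
  (hg : 1 - a0 / sb <= g ^+ 2).

Lemma Sg_up x : bil Sg x x <= sb * vnorm x ^+ 2.
Proof.
apply: le_trans (bil_le_opnorm Sg x) _; apply: ler_wpM2r; [apply: sqr_ge0 | exact: Sgsb].
Qed.

Lemma F_contr x : bil Sg (F^T *m x) (F^T *m x) <= g ^+ 2 * bil Sg x x.
Proof.
have e := Sg_phi; have h := Sgp x.
have h1 : bil Sg (F^T *m x) (F^T *m x) + a0 * vnorm x ^+ 2 <= bil Sg x x.
  rewrite [in X in _ <= X]Sg_phi phi_bil -/F.
  have := Wlow x; have := Vpsd (L^T *m x); lra.
have h2 := Sg_up x.
have h3 : a0 / sb * bil Sg x x <= a0 * vnorm x ^+ 2.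
  apply: le_trans (ler_wpM2l _ h2) _; first by apply: divr_ge0; apply: ltW.
  by rewrite mulrA divfK ?gt_eqF.
have h4 : (1 - a0 / sb) * bil Sg x x <= g ^+ 2 * bil Sg x x by apply: ler_wpM2r.
lra.
Qed.

Fixpoint Fp (k : nat) : 'M[R]_n := if k is k'.+1 then F *m Fp k' else 1%:M.

Lemma Fp_contr k x : bil Sg ((Fp k)^T *m x) ((Fp k)^T *m x) <= g ^+ (2 * k) * bil Sg x x.
Proof.
elim: k x => [|k IH] x /=; first by rewrite trmx1 mul1mx expr0 mul1r.
rewrite trmx_mul -mulmxA; apply: le_trans (IH _) _.
rewrite mulnS exprD [g ^+ 2 * _]mulrC -mulrA; apply: ler_wpM2l; first by apply: exprn_ge0.
exact: F_contr.
Qed.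

Lemma Sig_diff t : (1 <= t)%N ->
  Sig A C W V t - Sg = Psi A C W V t 1 *m (W - Sg) *m (Fp t.-1)^T.
Proof.
elim: t => [//|t IH] t1.
case: t IH t1 => [|t] IH _.
  by rewrite /= ric0 trmx1 mul1mx mulmx1.
rewrite Psi_step //.
have [IT Ip] := Sig_psd t.+1.
have Mu := Mof_unit C a0p Sgp Vlow.
have -> : Sig A C W V t.+2 = riccati A C W V (Sig A C W V t.+1) by [].
rewrite [X in _ - X]Sgfix (ric_diff A W IT SgT VT (Sig_unit t.+1) Mu).
rewrite IH // [Fp t.+1]/= trmx_mul !mulmxA.
by [].
Qed.

Lemma Lt_diff t : Lt A C W V t - L = F *m (Sig A C W V t - Sg) *m C^T *m invmx (Mof C V (Sig A C W V t)).
Proof. by rewrite /Lt gain_diff //; [exact: Sig_unit | exact: (Mof_unit C a0p Sgp Vlow)]. Qed.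


Let kk := Num.sqrt (sb / a0).
Lemma kk_sq : kk ^+ 2 = sb / a0.
Proof. by rewrite /kk sqr_sqrtr // divr_ge0 // ltW. Qed.
Lemma kk_ge0 : 0 <= kk.
Proof. exact: sqrtr_ge0. Qed.

Lemma quad_to_norm (y : 'cV[R]_n) (c X : R) : 0 <= c -> 0 <= X ->
  a0 * vnorm y ^+ 2 <= c * sb * X ^+ 2 -> vnorm y <= kk * Num.sqrt c * X.
Proof.
move=> c0 X0 H; apply: sq_le.
  by apply: mulr_ge0 => //; apply: mulr_ge0; [exact: kk_ge0 | exact: sqrtr_ge0].
rewrite !exprMn kk_sq (sqr_sqrtr c0).
rewrite -(ler_pM2l a0p); apply: le_trans H _.
rewrite le_eqVlt; apply/orP; left; apply/eqP; field.
by rewrite gt_eqF.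
Qed.

Lemma Fp_vec m x : vnorm ((Fp m)^T *m x) <= kk * g ^+ m * vnorm x.
Proof.
have -> : g ^+ m = Num.sqrt (g ^+ (2 * m)).
  by rewrite exprM -[(g ^+ 2) ^+ m]exprAC sqrtr_sqr ger0_norm // exprn_ge0.
apply: quad_to_norm; [exact: exprn_ge0 | exact: vnorm_ge0 |].
apply: le_trans (Sg_low _) _.
apply: le_trans (Fp_contr _ _) _.
rewrite -mulrA; apply: ler_wpM2l; first exact: exprn_ge0.
exact: Sg_up.
Qed.

Lemma Psi_vec t x : (1 <= t)%N -> vnorm ((Psi A C W V t 1)^T *m x) <= kk * vnorm x.
Proof.
move=> t1; rewrite -[kk]mulr1 -sqrtr1.
apply: quad_to_norm; [lra | exact: vnorm_ge0 |].
apply: le_trans (Wlow _) _; apply: le_trans (Psi_bound _ t1) _.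
apply: le_trans (Sig_le_Sg _ _) _; rewrite mul1r; exact: Sg_up.
Qed.

Lemma Psi_vec' t x : (1 <= t)%N -> vnorm (Psi A C W V t 1 *m x) <= kk * vnorm x.
Proof.
move=> t1; rewrite -[Psi _ _ _ _ t 1]trmxK.
by apply: bound_tr; [exact: kk_ge0 | move=> y; exact: Psi_vec].
Qed.

Lemma F_vec x : vnorm (F *m x) <= kk * g * vnorm x.
Proof.
rewrite -[F]trmxK; apply: bound_tr; first by apply: mulr_ge0 => //; exact: kk_ge0.
move=> y; have := Fp_vec 1 y; by rewrite /= mulmx1 expr1.
Qed.

Lemma Sig_vec t x : (1 <= t)%N ->
  vnorm ((Sig A C W V t - Sg) *m x) <= kk ^+ 2 * g ^+ t.-1 * opnorm (W - Sg) * vnorm x.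
Proof.
move=> t1; rewrite Sig_diff // -!mulmxA.
apply: le_trans (Psi_vec' _ t1) _.
have D0 := opnorm_ge0 (W - Sg).
have h1 := opnormP (W - Sg) ((Fp t.-1)^T *m x).
have h2 := Fp_vec t.-1 x.
have k0 := kk_ge0; have gt0 : 0 <= g ^+ t.-1 by exact: exprn_ge0.
have : vnorm ((W - Sg) *m ((Fp t.-1)^T *m x)) <= opnorm (W - Sg) * (kk * g ^+ t.-1 * vnorm x).
  by apply: le_trans h1 _; apply: ler_wpM2l.
move=> h3; have := ler_wpM2l k0 h3.
move=> h4; apply: le_trans h4 _.
rewrite le_eqVlt; apply/orP; left; apply/eqP; ring.
Qed.

Lemma Lt_vec t x (c : R) : (1 <= t)%N -> 0 <= c ->
  (forall y, vnorm (invmx (Mof C V (Sig A C W V t)) *m y) <= c * vnorm y) ->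
  vnorm ((Lt A C W V t - L) *m x) <=
    (kk * g) * (kk ^+ 2 * g ^+ t.-1 * opnorm (W - Sg)) * opnorm C * c * vnorm x.
Proof.
move=> t1 c0 hc; rewrite Lt_diff -!mulmxA.
apply: le_trans (F_vec _) _.
set y := invmx _ *m x.
have h1 := Sig_vec (C^T *m y) t1.
have h2 := opnormP_tr C y.
have h3 := hc x.
have k0 := kk_ge0; have gt0 : 0 <= g ^+ t.-1 by exact: exprn_ge0.
have D0 := opnorm_ge0 (W - Sg); have C0 := opnorm_ge0 C.
set P := kk ^+ 2 * g ^+ t.-1 * opnorm (W - Sg).
have P0 : 0 <= P by rewrite /P; apply: mulr_ge0 => //; apply: mulr_ge0 => //; apply: exprn_ge0.
have kg0 : 0 <= kk * g by apply: mulr_ge0.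
have : vnorm ((Sig A C W V t - Sg) *m (C^T *m y)) <= P * (opnorm C * (c * vnorm x)).
  apply: le_trans h1 _; apply: ler_wpM2l => //.
  apply: le_trans h2 _; apply: ler_wpM2l => //.
move=> h4; apply: le_trans (ler_wpM2l kg0 h4) _.
rewrite le_eqVlt; apply/orP; left; apply/eqP; ring.
Qed.

Lemma invM_vec t (lv : R) : 0 < lv -> (forall x, lv * vnorm x ^+ 2 <= bil V x x) ->
  forall y, vnorm (invmx (Mof C V (Sig A C W V t)) *m y) <= lv^-1 * vnorm y.
Proof.
move=> lvp hv y.
set M := Mof C V (Sig A C W V t); set z := invmx M *m y.
have Mz : M *m z = y by rewrite /z mulmxA mulmxV ?mul1mx //; exact: Sig_unit.
have [_ Ip] := Sig_psd t.
have h1 : lv * vnorm z ^+ 2 <= bil M z z.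
  apply: le_trans (hv z) _; rewrite /M /Mof bil_addM bil_conj lerDr; exact: Ip.
have h2 : bil M z z <= vnorm z * vnorm y by rewrite bil_dot Mz; exact: dot_CS.
have z0 := vnorm_ge0 z; have y0 := vnorm_ge0 y.
rewrite -(ler_pM2l lvp) mulrA mulfV ?gt_eqF // mul1r.
case: (leP (lv * vnorm z) (vnorm y)) => // h; exfalso.
have zp : 0 < vnorm z by case: (ltP 0 (vnorm z)) => // hz; nra.
nra.
Qed.

End Seq.

Unset Implicit Arguments. Set Strict Implicit. Set Printing Implicit Defensive.


Lemma loewner_low {R : realType} m (a : R) (W : 'M[R]_m) :
  loewner_le (a%:M) W -> W^T = W /\ forall x, a * vnorm x ^+ 2 <= bil W x x.
Proof.
move=> [T Q]; split.
  by move: T; rewrite raddfB /= tr_scalar_mx => /addIr.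
move=> x; have := Q x; rewrite -/(bil (W - a%:M) x x) bil_subM bil_scalar -/(dot x x) -vnorm_sq.
by rewrite subr_ge0.
Qed.

Arguments loewner_low {R m a W}.

Lemma dim0_bound {R : realType} p (M : 'M[R]_p) (y : 'cV[R]_p) c : p = 0%N ->
  vnorm (M *m y) <= c * vnorm y.
Proof. by move=> p0; subst p; rewrite (flatmx0 y) mulmx0 vnorm0 mulr0. Qed.

Arguments dim0_bound {R p} M y c.

Lemma lmin0 {R : realType} p (M : 'M[R]_p) : p = 0%N -> lambda_min M = 0.
Proof.
move=> p0; subst p; rewrite /lambda_min.
have -> : [set a : R | eigenvalue M a]%classic = set0.
  apply/seteqP; split => a //=.
  by rewrite /eigenvalue (flatmx0 (eigenspace M a)) eqxx.
exact: inf0.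
Qed.

Arguments lmin0 {R p} M.

Lemma opn0 {R : realType} a b (M : 'M[R]_(a,b)) : a = 0%N -> opnorm M = 0.
Proof.
move=> a0; apply/eqP; rewrite eq_le opnorm_ge0 andbT.
apply: opnorm_le => // x; subst a; by rewrite vnorm_dim0 mul0r.
Qed.

Arguments opn0 {R a b} M.

Theorem lemmaE5 (R : realType) (n p : nat)
  (A : 'M[R]_n) (C : 'M[R]_(p, n)) (W : 'M[R]_n) (V : 'M[R]_p)
  (Wh : 'M[R]_n) (Sigma : 'M[R]_n)
  (alpha0 alpha1 psi sigbar : R) :
  0 < alpha0 -> 0 < alpha1 -> 0 < psi -> 0 < sigbar ->
  psd Wh -> Wh *m Wh = W ->
  stabilizable A Wh -> detectable A C ->
  loewner_le (alpha0%:M) W -> loewner_le W (alpha1%:M) ->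
  loewner_le (alpha0%:M) V -> loewner_le V (alpha1%:M) ->
  opnorm C <= psi ->
  psd Sigma -> Sigma = riccati A C W V Sigma ->
  opnorm Sigma <= sigbar ->
  let L := kgain A C V Sigma in
  let kappaF := Num.sqrt (sigbar / alpha0) in
  let gammaF := 1 - alpha0 / (2 * sigbar) in
  let rho := Num.sqrt (opnorm (W + L *m V *m L^T) / (lambda_min W * (1 - gammaF ^+ 2))) in
  forall t : nat, (1 <= t)%N ->
    [/\ opnorm (Psi A C W V t 1) <=
          Num.sqrt (opnorm (W + L *m V *m L^T) * kappaF ^+ 2
                    / (lambda_min W * (1 - gammaF ^+ 2))),
        opnorm (Sig A C W V t - Sigma) <=
          kappaF ^+ 2 * gammaF ^+ t.-1 * opnorm (W - Sigma) * rho
      & opnorm (Lt A C W V t - L) <=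
          kappaF ^+ 3 * gammaF ^+ t * opnorm (W - Sigma) * opnorm C
            / lambda_min V * rho].
Proof.
move=> a0p _ _ sbp _ _ _ _ hW _ hV _ _ [SgT Sgp0] Sgfix Sgsb L kappaF gammaF rho t t1.
have [WT Wlow] := loewner_low hW.
have [VT Vlow] := loewner_low hV.
have Sgp : forall x, 0 <= bil Sigma x x := Sgp0.
case: (posnP n) => [n0|npos].
  rewrite (opn0 (Psi A C W V t 1)) // (opn0 (Sig A C W V t - Sigma)) //.
  rewrite (opn0 (W - Sigma)) // (opn0 (Lt A C W V t - L)) // !mulr0 !mul0r.
  by split => //; exact: sqrtr_ge0.
have [e ve] := @unit_vec R n npos.
have Slow := Sg_low a0p VT Wlow Vlow SgT Sgp Sgfix.
have Sup := Sg_up Sgsb.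
have a0sb : alpha0 <= sigbar.
  by have := Slow e; have := Sup e; rewrite ve expr1n !mulr1; lra.
set u := alpha0 / sigbar.
have u0 : 0 < u by rewrite /u divr_gt0.
have u1 : u <= 1 by rewrite /u ler_pdivrMr //; lra.
have gE : gammaF = 1 - u / 2.
  by rewrite /gammaF /u; field; rewrite gt_eqF.
have gp : 0 <= gammaF by rewrite gE; lra.
have hg : 1 - alpha0 / sigbar <= gammaF ^+ 2 by rewrite -/u gE; nra.
have g1 : gammaF ^+ 2 < 1 by rewrite gE; nra.
have Pv := Psi_vec' a0p WT VT Wlow Vlow SgT Sgp Sgfix sbp Sgsb.
have Sv := Sig_vec a0p WT VT Wlow Vlow SgT Sgp Sgfix sbp Sgsb gp hg.
have Lv := Lt_vec a0p WT VT Wlow Vlow SgT Sgp Sgfix sbp Sgsb gp hg.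
have k0 : 0 <= kappaF := sqrtr_ge0 _.
have [lWa lWq lWe] := lambda_min_prop npos a0p WT Wlow.
set Q := W + L *m V *m L^T.
have lWQ : lambda_min W <= opnorm Q.
  apply: le_trans (lWe e ve) _.
  have h := bil_le_opnorm Q e; rewrite ve expr1n mulr1 in h; apply: le_trans _ h.
  rewrite /Q bil_addM bil_conj lerDl; exact: (Vpsd a0p Vlow).
set d := lambda_min W * (1 - gammaF ^+ 2).
have dp : 0 < d by rewrite /d; apply: mulr_gt0; lra.
have dQ : d <= opnorm Q by rewrite /d; have := sqr_ge0 gammaF; nra.
have rho1 : 1 <= rho.
  by rewrite /rho -[X in X <= _]sqrtr1 ler_wsqrtr // ler_pdivlMr // mul1r; exact: dQ.
have D0 := opnorm_ge0 (W - Sigma).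
have gt0 : 0 <= gammaF ^+ t.-1 := exprn_ge0 _ gp.
split.
- apply: (le_trans (opnorm_le k0 (fun x => Pv t x t1))).
  apply: (@le_trans _ _ (Num.sqrt (kappaF ^+ 2))); first by rewrite sqrtr_sqr ger0_norm.
  rewrite ler_wsqrtr // ler_pdivlMr //.
  have := sqr_ge0 kappaF; nra.
- have c0 : 0 <= kappaF ^+ 2 * gammaF ^+ t.-1 * opnorm (W - Sigma).
    by apply: mulr_ge0 => //; apply: mulr_ge0 => //; apply: sqr_ge0.
  apply: (le_trans (opnorm_le c0 (fun x => Sv t x t1))).
  exact: ler_peMr.
- have [lV0 hinv] : 0 <= lambda_min V /\ forall y, vnorm (invmx (Mof C V (Sig A C W V t)) *m y) <= (lambda_min V)^-1 * vnorm y.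
    case: (posnP p) => [p0|ppos].
      by rewrite (lmin0 V p0); split => // y; apply: dim0_bound.
    have [lVa lVq _] := lambda_min_prop ppos a0p VT Vlow.
    have lVp : 0 < lambda_min V by lra.
    split; first lra.
    exact: (invM_vec A C a0p WT VT Wlow Vlow t lVp lVq).
  have C0 := opnorm_ge0 C.
  have iv0 : 0 <= (lambda_min V)^-1 by rewrite invr_ge0.
  set c := (kappaF * gammaF) * (kappaF ^+ 2 * gammaF ^+ t.-1 * opnorm (W - Sigma)) * opnorm C * (lambda_min V)^-1.
  have c0 : 0 <= c.
    rewrite /c; apply: mulr_ge0 => //; apply: mulr_ge0 => //; apply: mulr_ge0.
      exact: mulr_ge0.
    by apply: mulr_ge0 => //; apply: mulr_ge0 => //; apply: sqr_ge0.
  apply: (le_trans (opnorm_le c0 (fun x => Lv t x _ t1 iv0 hinv))).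
  have -> : gammaF ^+ t = gammaF * gammaF ^+ t.-1 by case: (t) t1 => // t' _; rewrite exprS.
  have -> : kappaF ^+ 3 * (gammaF * gammaF ^+ t.-1) * opnorm (W - Sigma) * opnorm C / lambda_min V * rho
    = c * rho by rewrite /c; ring.
  exact: ler_peMr.
Qed.
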